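(* Let $R$ be a commutative ring and $n$ a positive integer. Then the formal power series ring $R[[x]]$ is $n$-strongly clean if and only if $R$ is $n$-strongly clean.
   Context: All rings are associative with identity. For a positive integer $n$, an element $x \in R$ is $n$-strongly clean if $x = e + u_1 + \cdots + u_n$ where $e^2=e$, $u_1,\dots,u_n$ are units of $R$, and $eu_i = u_i e$ for all $i$; $R$ is $n$-strongly clean if every element of $R$ is $n$-strongly clean. *)

(* Defs.v *)
From HB Require Import structures.
From mathcomp Require Import all_boot all_order all_algebra.
Set Implicit Arguments. Unset Strict Implicit. Unset Printing Implicit Defensive.
Import GRing.Theory.
Local Open Scope ring_scope.

Definition is_unit_op (T : Type) (mul : T -> T -> T) (one : T) (u : T) : Prop :=
  exists v, mul u v = one /\ mul v u = one.

Definition nsc_elt_op (T : Type) (add mul : T -> T -> T) (zero one : T)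
    (n : nat) (x : T) : Prop :=
  exists (e : T) (u : 'I_n -> T),
    [/\ mul e e = e,
        (forall i, is_unit_op mul one (u i)),
        (forall i, mul e (u i) = mul (u i) e) &
        x = add e (\big[add/zero]_(i < n) u i)].

Definition nsc_ring_op (T : Type) (add mul : T -> T -> T) (zero one : T)
    (n : nat) : Prop :=
  forall x : T, nsc_elt_op add mul zero one n x.

Definition n_strongly_clean (R : pzRingType) (n : nat) : Prop :=
  nsc_ring_op (@GRing.add R) (@GRing.mul R) 0 1 n.

Definition fps (R : Type) := nat -> R.

Definition fps_add (R : pzRingType) (f g : fps R) : fps R := fun k => f k + g k.
Definition fps_mul (R : pzRingType) (f g : fps R) : fps R :=
  fun k => \sum_(i < k.+1) f i * g (k - i)%N.
Definition fps_zero (R : pzRingType) : fps R := fun _ => 0.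
Definition fps_one (R : pzRingType) : fps R := fun k => (k == 0%N)%:R.

Definition fps_n_strongly_clean (R : pzRingType) (n : nat) : Prop :=
  nsc_ring_op (@fps_add R) (@fps_mul R) (fps_zero R) (fps_one R) n.

(* Main.v *)
Require Import Defs.
From mathcomp Require Import all_boot all_order all_algebra.
From Stdlib Require Import FunctionalExtensionality.
From mathcomp Require Import zify.
Set Implicit Arguments. Unset Strict Implicit. Unset Printing Implicit Defensive.
Import GRing.Theory.
Local Open Scope ring_scope.

Section Aux.
Variable R : comPzRingType.

Definition cst (a : R) : fps R := fun k => if k == 0%N then a else 0.

Lemma fps_mul0 (f g : fps R) : fps_mul f g 0%N = f 0%N * g 0%N.
Proof. by rewrite /fps_mul big_ord1. Qed.

Lemma fps_mulC (f g : fps R) : fps_mul f g = fps_mul g f.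
Proof.
apply: functional_extensionality => k; rewrite /fps_mul.
rewrite (reindex_inj rev_ord_inj); apply: eq_bigr => i _.
have -> : (rev_ord i : nat) = (k - i)%N by rewrite [LHS]subSS.
have hi : (i <= k)%N by rewrite -ltnS.
rewrite (subKn hi); exact: mulrC.
Qed.

Lemma fps_mul_cst (a : R) (g : fps R) : fps_mul (cst a) g = fun k => a * g k.
Proof.
apply: functional_extensionality => k; rewrite /fps_mul big_ord_recl.
rewrite big1 ?addr0.
 by rewrite subn0.
move=> i _; by rewrite /cst mul0r.
Qed.

Lemma fps_sum_eval n (u : 'I_n -> fps R) k :
  (\big[@fps_add R/fps_zero R]_(i < n) u i) k = \sum_(i < n) u i k.
Proof.
by apply: (big_morph (fun f : fps R => f k)) => // x y.
Qed.

Variables (f : fps R) (b : R).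

Fixpoint w (m : nat) : nat -> R :=
  match m with
  | 0%N => fun k => if k == 0%N then b else 0
  | m'.+1 => fun k => if k == m'.+1 then - b * \sum_(i < m'.+1) f i.+1 * w m' (m' - i)%N
                      else w m' k
  end.

Lemma w_stable m d k : (k <= m)%N -> w (m + d) k = w m k.
Proof.
move=> km; elim: d => [|d IH]; first by rewrite addn0.
rewrite addnS /=. case: eqP => [E|_ //]; exfalso; move: km; rewrite E; lia.
Qed.

Lemma w_ge m k : (k <= m)%N -> w m k = w k k.
Proof. by move=> km; rewrite -(subnK km) addnC w_stable. Qed.

Definition v k := w k k.

Lemma v_rec m : v m.+1 = - b * \sum_(i < m.+1) f i.+1 * v (m - i)%N.
Proof.
rewrite /v /= eqxx; congr (_ * _); apply: eq_bigr => i _.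
by rewrite w_ge // leq_subr.
Qed.

Lemma inv_ok : f 0%N * b = 1 -> fps_mul f v = fps_one R.
Proof.
move=> fb; apply: functional_extensionality => k; rewrite /fps_one.
case: k => [|m]; first by rewrite fps_mul0 /v /= fb.
rewrite /fps_mul big_ord_recl /= subn0 v_rec mulrA mulrN fb mulN1r.
rewrite [X in _ + X](_ : _ = \sum_(i < m.+1) f i.+1 * v (m - i)%N) ?addNr //.
Qed.

End Aux.

Lemma unit_lift (R : comPzRingType) (f : fps R) :
  is_unit_op (@GRing.mul R) 1 (f 0%N) -> is_unit_op (@fps_mul R) (fps_one R) f.
Proof.
case=> b [fb _]; exists (v f b); split; first exact: inv_ok.
by rewrite fps_mulC inv_ok.
Qed.

Theorem proposition1p5 (R : comPzRingType) (n : nat) (hn : (0 < n)%N) :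
  fps_n_strongly_clean R n <-> n_strongly_clean R n.
Proof.
split.
- move=> H r; have [e [u [ee uu eu ex]]] := H (cst r).
  exists (e 0%N), (fun i => u i 0%N); split.
  + by rewrite -fps_mul0 ee.
  + move=> i; have [y [h1 h2]] := uu i; exists (y 0%N).
    by rewrite -!fps_mul0 h1 h2.
  + by move=> i; rewrite mulrC.
  + have := congr1 (fun h => h 0%N) ex; rewrite /= /fps_add fps_sum_eval.
    by rewrite /cst /=.
- move=> H f; have [e [u [ee uu eu ex]]] := H (f 0%N).
  pose U := fun (i : 'I_n) k => if k == 0%N then u i else if val i == 0%N then f k else 0.
  exists (cst e), U; split.
  + rewrite fps_mul_cst; apply: functional_extensionality => k; rewrite /cst.
    by case: eqP => _; rewrite ?ee ?mulr0.
  + by move=> i; apply: unit_lift; rewrite /U /=.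
  + by move=> i; rewrite fps_mulC.
  + apply: functional_extensionality => k; rewrite /fps_add fps_sum_eval /cst /U.
    case: eqP => [->|_]; first by rewrite ex.
    rewrite add0r (bigD1 (Ordinal hn)) //= big1 ?addr0 //.
    move=> i hi; case: ifP => // h; case/eqP: hi; apply: val_inj; by apply/eqP.
Qed.
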